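(* Let $X$ be a real random variable with finite mean $\mu:=\mathbb{E}(X)$ such that $\mu$ is also a median of $X$, i.e. $\mathbb{P}(X\ge\mu)\ge\frac12$ and $\mathbb{P}(X\le\mu)\ge\frac12$. Then \[ \mathbb{E}(X\mid X\ge \mu) \le \mu + \sqrt{\text{Var}(X)}. \] *)

(* Defs.v *)
From HB Require Import structures.
From mathcomp Require Import all_boot all_order all_algebra.
From mathcomp Require Import all_classical all_reals all_analysis.
Set Implicit Arguments. Unset Strict Implicit. Unset Printing Implicit Defensive.
Import Order.TTheory GRing.Theory Num.Theory.
Local Open Scope classical_set_scope.
Local Open Scope ring_scope.
Local Open Scope ereal_scope.

Definition cond_expectation_event d (T : measurableType d) (R : realType)
  (P : probability T R) (X : T -> R) (A : set T) : \bar R :=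
  ((fine (P A))^-1)%:E * \int[P]_(x in A) (X x)%:E.

(* Main.v *)
Require Import Defs.
From HB Require Import structures.
From mathcomp Require Import all_boot all_order all_algebra.
From mathcomp Require Import all_classical all_reals all_analysis.
From mathcomp Require Import lra.
Import Order.TTheory GRing.Theory Num.Theory.
Import measurable_realfun.
Local Open Scope classical_set_scope.
Local Open Scope ring_scope.
Local Open Scope ereal_scope.

Section S.
Context d (T : measurableType d) (R : realType) (P : probability T R).

Lemma Lfun2_of (f : T -> R) : measurable_fun setT f ->
  P.-integrable setT (EFin \o (fun x => (f x ^+ 2)%R)) -> f \in Lfun P 2%:E.
Proof.
move=> mf /integrableP[_ fi].
rewrite inE; apply/andP; split; rewrite inE/=; first by [].
rewrite /finite_norm unlock /Lnorm poweR_lty//.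
apply: le_lt_trans fi; rewrite le_eqVlt; apply/orP; left; apply/eqP.
apply: eq_integral => x _ /=.
by rewrite /= powR_mulrn ?normrX.
Qed.

Lemma indic_sqr (A : set T) : (fun x => (\1_A x : R) ^+ 2)%R = \1_A.
Proof. by apply/funext => x; rewrite indicE; case: (x \in A); rewrite /= ?expr1n ?expr0n. Qed.

End S.

Theorem lemma5 (d : measure_display) (T : measurableType d) (R : realType)
  (P : probability T R) (X : {RV P >-> R}) :
  P.-integrable setT (EFin \o X) ->
  (2^-1)%:E <= P [set x | fine 'E_P[X] <= X x]%R ->
  (2^-1)%:E <= P [set x | X x <= fine 'E_P[X]]%R ->
  cond_expectation_event P X [set x | fine 'E_P[X] <= X x]%R
    <= 'E_P[X] + sqrte 'V_P[X].
Proof.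
move=> iX hp _.
have X1 : (X : T -> R) \in Lfun P 1 by apply/Lfun1_integrable.
have Efin := expectation_fin_num X1.
set mu := fine 'E_P[X] in hp *.
have hE : 'E_P[X] = mu%:E by rewrite /mu fineK.
have [Vfin|Vinf] := boolP ('V_P[X] \is a fin_num); last first.
  have -> : 'V_P[X] = +oo.
    by move: Vinf; rewrite ge0_fin_numE ?variance_ge0// -leNgt leye_eq => /eqP.
  by rewrite hE /= leey.
set A := [set x | mu <= X x]%R in hp *.
have mA : measurable A.
  have -> : A = X @^-1` `[mu, +oo[.
    by apply/seteqP; split => x /=; rewrite in_itv/= andbT.
  exact: measurable_funPTI.
pose Y := (X \- cst mu)%R.
have mY : measurable_fun setT Y by exact: measurable_realfun.measurable_funB.
have VE : 'V_P[X] = \int[P]_x (((Y x) ^+ 2)%R)%:E.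
  rewrite /variance covariance.unlock -/mu expectation.unlock.
  by apply: eq_integral => x _; rewrite /Y /= expr2.
have X2 : (X : T -> R) \in Lfun P 2%:E.
  have Y2 : Y \in Lfun P 2%:E.
    apply: Lfun2_of => //.
    apply/integrableP; split.
      by apply/measurable_EFinP; apply: measurable_funX.
    move: Vfin; rewrite VE => /fin_numPlt/andP[_]; apply: le_lt_trans.
    by rewrite le_eqVlt; apply/orP; left; apply/eqP; apply: eq_integral => x _; rewrite gee0_abs// lee_fin sqr_ge0.
  have -> : (X : T -> R) = (Y \+ cst mu)%R by apply/funext => x; rewrite /Y /= subrK.
  rewrite rpredD //; [by rewrite lee_fin ler1n | by move=> ?; exact: Lfun_cst].
pose I : T -> R := \1_A.
have mI : measurable_fun setT I by exact: measurable_indic.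
have I2 : I \in Lfun P 2%:E.
  apply: Lfun2_of => //; rewrite indic_sqr; exact: integrable_indic.
have Pfin : P setT \is a fin_num := fin_num_measure P _ measurableT.
have I1 := Lfun_subset12 Pfin I2.
have XI1 := Lfun2_mul_Lfun1 X2 I2.
have hcov := covariance_le X2 I2.
rewrite covarianceE// expectation_indic// in hcov.
have VI : 'V_P[I] = P A - P A ^+ 2.
  rewrite varianceE// expectation_indic//.
  have -> : (I ^+ 2)%R = I by rewrite -[RHS]indic_sqr; apply/funext => x; rewrite /= expr2.
  by rewrite expectation_indic.
rewrite VI in hcov.
have EXI : 'E_P[(X : T -> R) * I] = \int[P]_(x in A) (X x)%:E.
  rewrite integral_mkcond expectation.unlock; apply: eq_integral => x _.
  rewrite /I patchE /=; have -> : (((X : T -> R) * \1_A) x = X x * \1_A x)%R by [].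
  by rewrite indicE; case: (x \in A); rewrite /= ?mulr1 ?mulr0.
have PA : P A = (fine (P A))%:E by rewrite fineK ?fin_num_measure.
set p := fine (P A) in PA.
have EXIfin : 'E_P[(X : T -> R) * I] \is a fin_num by exact: expectation_fin_num.
have EXIa : 'E_P[(X : T -> R) * I] = (fine 'E_P[(X : T -> R) * I])%:E by rewrite fineK.
set a := fine 'E_P[(X : T -> R) * I] in EXIa.
have VV : 'V_P[X] = (fine 'V_P[X])%:E by rewrite fineK.
set v := fine 'V_P[X] in VV.
have v0 : (0 <= v)%R by rewrite -lee_fin -VV variance_ge0.
have p1 : (p <= 1)%R by rewrite -lee_fin -PA probability_le1.
have p2 : (2^-1 <= p)%R by rewrite -lee_fin -PA.
rewrite /cond_expectation_event -/p -EXI EXIa hE VV /= -EFinM -EFinD lee_fin.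
rewrite EXIa hE PA VV /= -EFinD -EFinM lee_fin in hcov.
have sq : (Num.sqrt (p - p * p) <= p)%R.
  rewrite -[X in (_ <= X)%R](@ger0_norm _ p) ?(le_trans _ p2)// -sqrtr_sqr.
  by rewrite ler_wsqrtr//; nra.
have p0 : (0 < p)%R by apply: lt_le_trans p2; rewrite invr_gt0.
rewrite ler_pdivrMl// mulrDr.
have : (Num.sqrt v * Num.sqrt (p - p * p) <= Num.sqrt v * p)%R by rewrite ler_wpM2l ?sqrtr_ge0.
nra.
Qed.
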